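(* For every integer $r\ge 2$, $m(K_{1*r,3})=3$.
   Context: All graphs are finite, simple and undirected. A list assignment $L$ for a graph $G$ assigns to each vertex $v$ a set $L(v)$ of colors; an $L$-coloring is a proper vertex coloring $c$ of $G$ with $c(v)\in L(v)$ for every vertex $v$. A $k$-list assignment is a list assignment with $|L(v)|=k$ for all $v$. $G$ is uniquely $k$-list colorable (U$k$LC) if there exists a $k$-list assignment $L$ such that $G$ has exactly one $L$-coloring. $G$ has property $M(k)$ if it is not U$k$LC, i.e. for every $k$-list assignment $L$, $G$ has either no $L$-coloring or at least two $L$-colorings. The m-number $m(G)$ is the least integer $k\ge 1$ such that $G$ has property $M(k)$. $K_{1*r,s}$ denotes the complete $(r+1)$-partite graph with $r$ parts of size $1$ and one part of size $s$. *)

(* Defs.v *)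
From mathcomp Require Import all_boot.
Set Implicit Arguments. Unset Strict Implicit. Unset Printing Implicit Defensive.

(* A simple graph is a symmetric irreflexive relation [e] on a finType [T].
   Colors are natural numbers; a list L(v) is a duplicate-free seq of colors. *)

Section ListColoring.
Variable T : finType.
Variable e : rel T.

Definition L_coloring (L : T -> seq nat) (c : T -> nat) : Prop :=
  (forall x y, e x y -> c x != c y) /\ (forall v, c v \in L v).

Definition k_list_assignment (k : nat) (L : T -> seq nat) : Prop :=
  forall v, uniq (L v) /\ size (L v) = k.

Definition UkLC (k : nat) : Prop :=
  exists L, k_list_assignment k L /\
    exists c, L_coloring L c /\
      forall c', L_coloring L c' -> forall v, c' v = c v.

Definition property_M (k : nat) : Prop := ~ UkLC k.

Definition is_m_number (m : nat) : Prop :=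
  1 <= m /\ property_M m /\ (forall k, 1 <= k -> k < m -> ~ property_M k).

End ListColoring.

(* K_{1*r,s}: vertices 'I_(r+s); vertices i < r are the r singleton parts,
   vertices r, ..., r+s-1 form the part of size s. *)
Definition K1rs (r s : nat) : rel 'I_(r + s) :=
  fun i j => (i != j) && ((i < r) || (j < r)).
Arguments K1rs r s : clear implicits.

(* Main.v *)
Require Import Defs.
From mathcomp Require Import all_boot.
From mathcomp Require Import zify.
From Stdlib Require Import Classical.


Section Rot.
Variable T : finType.
Variable e : rel T.
Variable L : T -> seq nat.
Variable c : T -> nat.
Hypothesis irr : forall x, e x x = false.
Hypothesis Hc : L_coloring e L c.

Lemma recolor_case v g : g \in L v -> g != c v ->
  (forall y, (e v y || e y v) -> c y != g) ->
  exists c', L_coloring e L c' /\ exists w, c' w != c w.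
Proof.
move=> gL gn Hy; exists (fun x => if x == v then g else c x); split; last first.
  by exists v; rewrite eqxx.
case: Hc => He Hl; split; last by move=> x; case: eqP => [->|]; [exact gL|move=> _; exact: Hl].
move=> x y exy.
case: (eqVneq x v) => [xv|xv]; case: (eqVneq y v) => [yv|yv].
- by subst; rewrite irr in exy.
- by subst; rewrite eq_sym; apply: Hy; rewrite exy.
- by subst; apply: Hy; rewrite exy orbT.
- exact: He.
Qed.

Variable f : T -> T.
Hypothesis hf : forall v, f v != v /\ c (f v) \in L v /\ forall z, c z = c (f v) -> z = f v.

Lemma rot_cycle y p : 0 < p -> iter p f y = y ->
  exists c', L_coloring e L c' /\ exists w, c' w != c w.
Proof.
move=> p0 Hp.
pose inP v := [exists k : 'I_p, v == iter k f y].
have Pf : forall v, inP v -> inP (f v).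
  move=> v /existsP [k /eqP ->]; apply/existsP.
  case: (ltnP k.+1 p) => hk.
    by exists (Ordinal hk); rewrite /= -iterS.
  have ek : k.+1 = p by have := ltn_ord k; lia.
  by exists (Ordinal p0); rewrite /= -iterS ek Hp.
have back : forall v, inP v -> iter p.-1 f (f v) = v.
  move=> v /existsP [k /eqP ->].
  rewrite -iterS -iterD.
  have -> : p.-1 + k.+1 = k + p by lia.
  by rewrite iterD Hp.
have Pinj : forall v v', inP v -> inP v' -> f v = f v' -> v = v'.
  by move=> v v' hv hv' E; rewrite -(back v hv) -(back v' hv') E.
case: Hc => He Hl.
exists (fun v => if inP v then c (f v) else c v); split; last first.
  have hy : inP y by apply/existsP; exists (Ordinal p0).
  exists y; rewrite hy; apply/eqP => E.
  have [h1 [_ h3]] := hf y.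
  by move: h1; rewrite -(h3 y (esym E)) eqxx.
split; last first.
  by move=> v; case: (inP v); [case: (hf v) => _ [] | apply: Hl].
move=> x z exz.
case hx: (inP x); case hz: (inP z).
- apply/eqP => E.
  have [_ [_ h3]] := hf z.
  have := Pinj x z hx hz (h3 _ E) => xz; subst.
  by rewrite irr in exz.
- apply/eqP => E.
  have [_ [_ h3]] := hf x.
  by move: hz; rewrite (h3 z (esym E)) Pf.
- apply/eqP => E.
  have [_ [_ h3]] := hf z.
  by move: hx; rewrite (h3 x E) Pf.
- exact: He.
Qed.

Lemma rot_exists (x0 : T) : exists c', L_coloring e L c' /\ exists w, c' w != c w.
Proof.
pose g (i : 'I_(#|T|.+1)) := iter i f x0.
have ninj : ~ injective g.
  by move=> /leq_card; rewrite card_ord ltnn.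
have [i [j [Eij nij]]] : exists i j, g i = g j /\ i <> j.
  apply: NNPP => H; apply: ninj => i j E; apply: NNPP => nij.
  by apply: H; exists i, j.
have key : forall a b : nat, a < b -> iter a f x0 = iter b f x0 ->
    exists c', L_coloring e L c' /\ exists w, c' w != c w.
  move=> a b ab E; apply: (rot_cycle (iter a f x0) (b - a)).
    lia.
  by rewrite -iterD subnK ?E // ltnW.
case: (ltngtP i j) => h.
- exact: key h Eij.
- exact: key h (esym Eij).
- by exfalso; apply: nij; apply: val_inj.
Qed.
End Rot.
Lemma U1 (r : nat) : UkLC (K1rs r 3) 1.
Proof.
exists (fun v => [:: nat_of_ord v]); split; first by move=> v.
exists (fun v => nat_of_ord v); split.
  split; last by move=> v; rewrite inE.
  by move=> x y /andP [].
by move=> c' [_ Hl] v; have := Hl v; rewrite inE => /eqP.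
Qed.

Lemma U2 (r : nat) : 2 <= r -> UkLC (K1rs r 3) 2.
Proof.
move=> hr.
pose L (v : 'I_(r+3)) := let i := nat_of_ord v in
  if i < r.-1 then [:: i.+1; i.+2] else if i == r.-1 then [:: r; 0]
  else if i == r.+1 then [:: 0; 2] else [:: 0; 1].
have vx : forall k, k < r + 3 -> exists v : 'I_(r+3), nat_of_ord v = k.
  by move=> k hk; exists (Ordinal hk).
exists L; split.
  move=> v; rewrite /L; case: ifP => _; first by rewrite /= inE; split => //; lia.
  case: ifP => _; first by rewrite /= inE; split => //; lia.
  by case: ifP.
exists (fun v => if nat_of_ord v < r then (nat_of_ord v).+1 else 0); split.
  split.
    move=> x y /andP [/eqP xy hxy]; have xy' : nat_of_ord x <> nat_of_ord y by move=> /val_inj.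
    have hxy' : (nat_of_ord x < r) || (nat_of_ord y < r) := hxy.
    case: ifP => hx; case: ifP => hy //; apply/eqP; try lia; by rewrite hx hy in hxy'.
  move=> v; rewrite /L /=.
  case: (ltnP v r.-1) => h1.
    have h : v < r by lia.
    by rewrite h inE eqxx.
  case: (ltnP v r) => h2.
    have -> : nat_of_ord v == r.-1 by apply/eqP; lia.
    by rewrite inE; apply/orP; left; apply/eqP; lia.
  have -> : (nat_of_ord v == r.-1) = false by apply/negbTE/eqP; lia.
  by case: ifP; rewrite inE eqxx.
move=> c' [He Hl].
have adj : forall x y : 'I_(r+3), (x : nat) <> y -> (x < r) || (y < r) -> c' x <> c' y.
  move=> x y xy h E; have := He x y; rewrite /K1rs h andbT E eqxx => H.
  have : x != y by apply/eqP => E'; apply: xy; rewrite E'.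
  by move/H.
have [u0 hu0] := vx 0 ltac:(lia).
have [u1 hu1] := vx 1 ltac:(lia).
have [w1 hw1] := vx r ltac:(lia).
have [w2 hw2] := vx r.+1 ltac:(lia).
have Lu0 : L u0 = [:: 1; 2] by rewrite /L hu0 ifT //; lia.
have Lw1 : L w1 = [:: 0; 1] by rewrite /L hw1 ifF ?ifF ?ifF //; lia.
have Lw2 : L w2 = [:: 0; 2].
  rewrite /L hw2 /=; case: ifP => h1; [lia|]; case: ifP => h2; [lia|]; case: ifP => h3 //; lia.
have step1 : forall v : 'I_(r+3), nat_of_ord v = r.-1 -> c' v = r.
  move=> v hv.
  have Lv : L v = [:: r; 0] by rewrite /L hv ifF ?ifT //; lia.
  have := Hl v; rewrite Lv !inE => /orP [/eqP //|/eqP cv].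
  exfalso.
  have c1 : c' w1 = 1.
    have := Hl w1; rewrite Lw1 !inE => /orP [/eqP h|/eqP //].
    by exfalso; apply: (adj v w1); [lia|apply/orP; left; lia|rewrite h cv].
  have c2 : c' w2 = 2.
    have := Hl w2; rewrite Lw2 !inE => /orP [/eqP h|/eqP //].
    by exfalso; apply: (adj v w2); [lia|apply/orP; left; lia|rewrite h cv].
  have := Hl u0; rewrite Lu0 !inE => /orP [/eqP h|/eqP h].
    by apply: (adj u0 w1); [lia|apply/orP; left; lia|rewrite h c1].
  by apply: (adj u0 w2); [lia|apply/orP; left; lia|rewrite h c2].
have step2 : forall d (v : 'I_(r+3)), nat_of_ord v + d = r.-1 -> c' v = (nat_of_ord v).+1.
  elim=> [|d IH] v hv.
    rewrite step1; lia.
  have [v' hv'] := vx (nat_of_ord v).+1 ltac:(lia).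
  have cv' := IH v' ltac:(lia).
  have Lv : L v = [:: (nat_of_ord v).+1; (nat_of_ord v).+2] by rewrite /L ifT //; lia.
  have := Hl v; rewrite Lv !inE => /orP [/eqP //|/eqP h].
  by exfalso; apply: (adj v v'); [lia|apply/orP; left; lia|rewrite h cv' hv'].
have cu : forall v : 'I_(r+3), v < r -> c' v = (nat_of_ord v).+1.
  move=> v hv; apply: (step2 (r.-1 - v)); lia.
move=> v; case: ifP => hv; first exact: cu.
have cu0 := cu u0 ltac:(lia); have cu1 := cu u1 ltac:(lia).
rewrite hu0 in cu0; rewrite hu1 in cu1.
have : c' v \in L v by [].
rewrite /L ifF; last lia. rewrite ifF; last lia.
case: ifP => _; rewrite !inE => /orP [/eqP //|/eqP h]; exfalso.
- by apply: (adj v u1); [lia|apply/orP; right; lia|rewrite h cu1].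
- by apply: (adj v u0); [lia|apply/orP; right; lia|rewrite h cu0].
Qed.

Lemma M3 (r : nat) : property_M (K1rs r 3) 3.
Proof.
move=> [L [HL [c [Hc Hu]]]].
have irr : forall x, K1rs r 3 x x = false by move=> x; rewrite /K1rs eqxx.
suff [c' [Hc' [w Hw]]] : exists c', L_coloring (K1rs r 3) L c' /\ exists w, c' w != c w.
  by move: Hw; rewrite (Hu c' Hc' w) eqxx.
case: (classic (exists v g, g \in L v /\ g != c v /\
    forall y, (K1rs r 3 v y || K1rs r 3 y v) -> c y != g)) => [[v [g [h1 [h2 h3]]]]|Hn].
  exact: recolor_case irr Hc v g h1 h2 h3.
case: Hc => He Hl.
have uniqlt : forall y : 'I_(r+3), y < r -> forall z, c z = c y -> z = y.
  move=> y yr z E; apply: NNPP => zy; have := He z y.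
  rewrite /K1rs yr orbT andbT E eqxx; by move/(_ (introN eqP zy)).
have key : forall v, exists y, y != v /\ c y \in L v /\ forall z, c z = c y -> z = y.
  move=> v.
  have Hnb : forall g, g \in L v -> g != c v ->
      exists y, (K1rs r 3 v y || K1rs r 3 y v) /\ c y = g.
    move=> g gL gn; apply: NNPP => H; apply: Hn; exists v, g; split => //; split => //.
    move=> y hy; apply/eqP => E; apply: H; by exists y.
  have [g1 [g2 [g1L [g2L [g1n [g2n g12]]]]]] : exists g1 g2, g1 \in L v /\ g2 \in L v /\
      g1 != c v /\ g2 != c v /\ g1 != g2.
    have [uL sL] := HL v; have cv := Hl v.
    move: uL sL cv; case: (L v) => [|a [|b [|d [|]]]] //= uL _.
    rewrite !inE; move: uL; rewrite !inE !negb_or => /andP [/andP [ab ad]] /andP [bd _].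
    case/or3P => /eqP ->.
    - exists b, d; rewrite !inE !eqxx !orbT /=; do !split => //; by rewrite eq_sym.
    - exists a, d; rewrite !inE !eqxx !orbT /=; do !split => //; by rewrite eq_sym.
    - exists a, b; rewrite !inE !eqxx !orbT /=; do !split => //; by rewrite eq_sym.
  have [y1 [hy1 cy1]] := Hnb g1 g1L g1n.
  have [y2 [hy2 cy2]] := Hnb g2 g2L g2n.
  have nbne : forall y, (K1rs r 3 v y || K1rs r 3 y v) -> y != v.
    by move=> y; rewrite /K1rs => /orP [/andP [h _]|/andP [h _]] //; rewrite eq_sym.
  case: (classic (forall z, c z = c y1 -> z = y1)) => U1.
    by exists y1; split; [exact: nbne | rewrite cy1; split => //; rewrite -cy1].
  case: (classic (forall z, c z = c y2 -> z = y2)) => U2.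
    by exists y2; split; [exact: nbne | rewrite cy2; split => //; rewrite -cy2].
  have [z1 [Ez1 nz1]] : exists z, c z = c y1 /\ z <> y1.
    apply: NNPP => H; apply: U1 => z E; apply: NNPP => nz; apply: H; by exists z.
  have [z2 [Ez2 nz2]] : exists z, c z = c y2 /\ z <> y2.
    apply: NNPP => H; apply: U2 => z E; apply: NNPP => nz; apply: H; by exists z.
  have ger : forall y : 'I_(r+3), ~ (forall z, c z = c y -> z = y) -> r <= y.
    by move=> y U; rewrite leqNgt; apply/negP => yr; apply: U; apply: uniqlt.
  have gez : forall z y : 'I_(r+3), c z = c y -> z <> y -> r <= z.
    move=> z y E nzy; rewrite leqNgt; apply/negP => zr.
    have := He z y; rewrite /K1rs zr E eqxx /= andbT => H.
    by case: (eqVneq z y) => [/nzy|/H].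
  have r1 := ger y1 U1; have r2 := ger y2 U2.
  have r3 := gez _ _ Ez1 nz1; have r4 := gez _ _ Ez2 nz2.
  have d12 : (y1 : nat) <> y2 by move=> /val_inj E; move: g12; rewrite -cy1 -cy2 E eqxx.
  have d34 : (z1 : nat) <> z2 by move=> /val_inj E; move: g12; rewrite -cy1 -cy2 -Ez1 -Ez2 E eqxx.
  have d13 : (z1 : nat) <> y1 by move=> /val_inj.
  have d24 : (z2 : nat) <> y2 by move=> /val_inj.
  have d14 : (z2 : nat) <> y1 by move=> /val_inj E; move: g12; rewrite -cy1 -cy2 -Ez2 E eqxx.
  have d23 : (z1 : nat) <> y2 by move=> /val_inj E; move: g12; rewrite -cy1 -cy2 -Ez1 E eqxx.
  have := ltn_ord y1; have := ltn_ord y2; have := ltn_ord z1; have := ltn_ord z2.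
  lia.
have x0 : 'I_(r+3) by exists 0; lia.
pose f v := odflt v [pick y | (y != v) && (c y \in L v) && [forall z, (c z == c y) ==> (z == y)]].
apply: (@rot_exists _ _ _ _ irr (conj He Hl) f _ x0).
move=> v; rewrite /f; case: pickP => [y /andP [/andP [h1 h2] /forallP h3]|H] /=.
  by split => //; split => // z E; apply/eqP; have := h3 z; rewrite E eqxx.
exfalso; have [y [h1 [h2 h3]]] := key v.
move: (H y); rewrite h1 h2 /=; move/negP; apply; apply/forallP => z.
by apply/implyP => /eqP E; apply/eqP; apply: h3.
Qed.

Theorem proposition3p7 (r : nat) (hr : 2 <= r) :
  is_m_number (K1rs r 3) 3.
Proof.
split => //; split; first exact: M3.
move=> k k1 k3 H; apply: H.
have : (k = 1) \/ (k = 2) by lia.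
by case=> ->; [exact: U1 | exact: U2].
Qed.
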